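(* For every $l\in w_{1+\infty}$, $$[\hat l^B,\phi(z)]=-\frac12\big(l_z-\iota(l_z)\big)\cdot\phi(z).$$
   Context: Neutral fermions $\{\phi_i\}_{i\in\mathbb{Z}}$ satisfy $[\phi_i,\phi_j]_+=(-1)^i\delta_{i+j,0}$, acting on the B-type Fock space generated from a vacuum $|0\rangle$ with $\phi_i|0\rangle=0$ for $i<0$; dual vacuum $\langle0|\phi_i=0$ for $i>0$, vacuum expectation with $\langle0|0\rangle=1$, $\langle0|\phi_0|0\rangle=0$. $\phi(z)=\sum_{i\in\mathbb{Z}}\phi_iz^i$; $:\!\phi_i\phi_j\!:\,=\phi_i\phi_j-\langle0|\phi_i\phi_j|0\rangle$. $w_{1+\infty}=\mathrm{span}_{\mathbb{C}}\{z^i\partial_z^j\}$, with involution $\iota(z^k(z\partial_z)^m)=(-z\partial_z)^m(-z)^k$ extended linearly. The B-type realization of $l\in w_{1+\infty}$ is $\hat l^B=\frac12\mathrm{Res}_w\,w^{-1}:\!\phi(z)\,(l_w\cdot\phi(w))\!:\big|_{z=-w}$. *)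

(* Defs.v *)
From HB Require Import structures.
From mathcomp Require Import all_boot all_order all_algebra.
From mathcomp Require Import finmap.
From mathcomp Require Import monalg.
From Stdlib Require Import ClassicalEpsilon.

Set Implicit Arguments.
Unset Strict Implicit.
Unset Printing Implicit Defensive.
Import Order.TTheory GRing.Theory Num.Theory.
Local Open Scope ring_scope.
Local Open Scope fset_scope.

(* Basis states of the B-type Fock space:  a finite set S = {s1>...>sk} of   *)
(* natural numbers stands for  phi_{s1} ... phi_{sk} |0>.                    *)
Definition state := {fset nat}.

Definition fock (R : numFieldType) := {malg R[state]}.

Definition vac (R : numFieldType) : fock R := << (fset0 : state) >>.

Definition nabove (p : nat) (S : state) : nat := #|` [fset s in S | (p < s)%N]|.

(*  - n = p >= 0 : phi_p creates p (sign from anticommuting past larger       *)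
(*    indices); if p is already present the result is 0 when p > 0 (phi_p^2=0)*)
(*    and (1/2) times the state with 0 removed when p = 0 (phi_0^2 = 1/2).   *)
(*  - n = -p < 0 : phi_{-p} annihilates p, with {phi_{-p}, phi_p} = (-1)^p.  *)
Definition phiB (R : numFieldType) (n : int) (S : state) : fock R :=
  match n with
  | Posz p =>
      if p \notin S then (-1) ^+ nabove p S *: << p |` S >>
      else if p == 0%N then ((-1) ^+ nabove p S / 2) *: << S `\ p >>
      else 0
  | Negz q =>
      let p := q.+1 in
      if p \in S then ((-1) ^+ nabove p S * (-1) ^+ p) *: << S `\ p >>
      else 0
  end.

Definition phi (R : numFieldType) (n : int) (v : fock R) : fock R :=
  \sum_(S <- msupp v) v@_S *: phiB R n S.

Definition vev (R : numFieldType) (X : fock R -> fock R) : R :=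
  (X (vac R))@_(fset0 : state).

Definition nord (R : numFieldType) (i j : int) (v : fock R) : fock R :=
  phi i (phi j v) - vev (fun w => phi i (phi j w)) *: v.

Definition comm (R : numFieldType) (A B : fock R -> fock R) (v : fock R) :=
  A (B v) - B (A v).

Definition zsum_spec (V : zmodType) (f : int -> V) (v : V) : Prop :=
  exists N : nat, forall M : nat, (N <= M)%N ->
    \sum_(t < (2 * M).+1) f (t%:Z - M%:Z) = v.

Definition zsum (V : zmodType) (f : int -> V) : V :=
  epsilon (inhabits 0) (zsum_spec f).

(* Elements of w_{1+infty}: finite linear combinations                       *)
(*   l = sum_{(c,k,m) in l} c * z^k (z d_z)^m ,   k in Z, m in N,            *)
(* (this family spans w_{1+infty} = span{z^i d_z^j}).                        *)
Definition winf (R : numFieldType) := seq (R * int * nat).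

(* coefficient of z^n in  l_z . z^i :  z^k (z d_z)^m z^i = i^m z^(i+k). *)
Definition wact (R : numFieldType) (l : winf R) (i n : int) : R :=
  \sum_(x <- l) (x.1.1 * (n == i + x.1.2)%:R * (i%:~R) ^+ x.2).

(* coefficient of z^n in  iota(l_z) . z^i, where iota is linear with         *)
(* iota(z^k (z d_z)^m) = (-z d_z)^m (-z)^k, and                               *)
(* (-z d_z)^m (-z)^k z^i = (-1)^k (-(i+k))^m z^(i+k).                        *)
Definition iota_act (R : numFieldType) (l : winf R) (i n : int) : R :=
  \sum_(x <- l) (x.1.1 * (n == i + x.1.2)%:R *
                  ((-1) ^+ `|x.1.2|%N * (- (i + x.1.2)%:~R) ^+ x.2)).

(*  hat l^B = 1/2 Res_w w^{-1} :phi(z) (l_w . phi(w)):|_{z=-w}                 *)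
(*          = 1/2 sum_{i,j} [coeff of w^{-1} in w^{-1} (-w)^j (l_w . w^i)]     *)
(*                 :phi_j phi_i:                                               *)
(*          = 1/2 sum_{i,j} (-1)^j (coeff of w^{-j} in l_w . w^i) :phi_j phi_i: *)
Definition hatB (R : numFieldType) (l : winf R) (v : fock R) : fock R :=
  2^-1 *: zsum (fun i : int =>
            zsum (fun j : int => ((-1) ^+ `|j|%N * wact l i (- j)) *: nord j i v)).

(* coefficient of z^n in  -1/2 (l_z - iota(l_z)) . phi(z)                      *)
(*   = -1/2 sum_i (coeff of z^n in (l - iota l) . z^i) phi_i                    *)
Definition rhs (R : numFieldType) (l : winf R) (n : int) (v : fock R) : fock R :=
  - (2^-1 *: zsum (fun i : int => (wact l i n - iota_act l i n) *: phi i v)).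

(* Main.v *)
Require Import Defs.
From HB Require Import structures.
From mathcomp Require Import all_boot all_order all_algebra.
From mathcomp Require Import finmap.
From mathcomp Require Import monalg.
From mathcomp Require Import zify ring.
From Stdlib Require Import ClassicalEpsilon.
Import GRing.Theory Num.Theory.
Set Implicit Arguments.
Unset Strict Implicit.
Unset Printing Implicit Defensive.
Local Open Scope ring_scope.

Definition rng (M : nat) : seq int := [seq (t%:Z - M%:Z) | t <- iota 0 (2 * M).+1].

Lemma mem_rng M i : (i \in rng M) = (absz i <= M)%N.
Proof.
apply/mapP/idP => [[t]|h].
  by rewrite mem_iota => /andP[_ ht] ->; lia.
exists (absz (i + M%:Z)%R); last lia.
rewrite mem_iota; lia.
Qed.

Lemma uniq_rng M : uniq (rng M).
Proof. by rewrite map_inj_uniq ?iota_uniq // => x y /addIr []. Qed.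

Lemma sum_rng (V : zmodType) (f : int -> V) M :
  \sum_(t < (2 * M).+1) f (t%:Z - M%:Z) = \sum_(i <- rng M) f i.
Proof.
by rewrite big_map -(big_mkord xpredT (fun t => f (t%:Z - M%:Z))) /index_iota subn0.
Qed.

Lemma sum_supp (V : zmodType) (I : eqType) (f : I -> V) (s s' : seq I) :
  uniq s -> uniq s' -> (forall i, f i != 0 -> i \in s) ->
  (forall i, f i != 0 -> i \in s') -> \sum_(i <- s) f i = \sum_(i <- s') f i.
Proof.
move=> us us' hs hs'.
have E t : \sum_(i <- t) f i = \sum_(i <- [seq i <- t | f i != 0]) f i.
  rewrite big_filter [RHS]big_mkcond /=; apply: eq_bigr => i _.
  by case: eqP => [->|].
rewrite (E s) (E s'); apply: perm_big; apply: uniq_perm; rewrite ?filter_uniq //.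
move=> i; rewrite !mem_filter; case h: (f i == 0) => //=.
by rewrite hs ?hs' ?h.
Qed.

Definition fin_by (V : zmodType) (N : nat) (f : int -> V) :=
  forall i, (N < absz i)%N -> f i = 0.

Lemma rng_sumE (V : zmodType) N (f : int -> V) M : fin_by N f -> (N <= M)%N ->
  \sum_(i <- rng M) f i = \sum_(i <- rng N) f i.
Proof.
move=> hf hM; apply: sum_supp; rewrite ?uniq_rng // => i; rewrite mem_rng;
  (case: (leqP (absz i) N) => h; [move=> _; lia | by rewrite hf ?eqxx]).
Qed.

Lemma zsumE (V : zmodType) N (f : int -> V) M : fin_by N f -> (N <= M)%N ->
  zsum f = \sum_(i <- rng M) f i.
Proof.
move=> hf hM.
have spec : zsum_spec f (\sum_(i <- rng N) f i).
  by exists N => M' hM'; rewrite sum_rng (rng_sumE hf hM').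
rewrite /zsum; case: (epsilon_spec (inhabits 0) (zsum_spec f) (ex_intro _ _ spec)) => N' hN'.
rewrite -(hN' (maxn N N')) ?leq_maxr // sum_rng (rng_sumE hf) ?leq_maxl //.
by rewrite (rng_sumE hf hM).
Qed.

Section Lin.
Variable R : numFieldType.
Implicit Types (v u w : fock R) (S T : state).

Lemma phiEw n v (X : seq state) : uniq X -> (forall S, S \in msupp v -> S \in X) ->
  phi n v = \sum_(S <- X) v@_S *: @phiB R n S.
Proof.
move=> uX sub; rewrite /phi; apply: sum_supp => //.
  move=> S; case: (msuppP v S) => //; by rewrite scale0r eqxx.
move=> S; case: (msuppP v S) => [*|]; [exact: sub|by rewrite scale0r eqxx].
Qed.

Lemma phi_lin n a u w : phi n (a *: u + w) = a *: phi n u + phi n w.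
Proof.
pose y : fock R := (a *: u + w)%R.
pose X := enum_fset (msupp u `|` msupp w `|` msupp y)%fset.
have uX : uniq X by exact: fset_uniq.
rewrite !(@phiEw n _ X) //; last 3 first.
- by move=> S hS; rewrite /X !inE hS ?orbT.
- by move=> S hS; rewrite /X !inE hS ?orbT.
- by move=> S hS; rewrite /X !inE hS ?orbT.
rewrite scaler_sumr -big_split /=; apply: eq_bigr => S _.
clear y X uX.
have E : (a *: u + w)@_S = a * u@_S + w@_S.
  rewrite (mcoeffD S (a *: u) w). rewrite (mcoeffZ a u S). done.
rewrite E.
rewrite scalerDl. rewrite scalerA. done.
Qed.

Lemma phi0 n : phi n (0 : fock R) = 0.
Proof. by rewrite /phi msupp0 big_seq_fset0. Qed.

Lemma phiD n u w : phi n (u + w) = phi n u + phi n w.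
Proof. by move: (phi_lin n 1 u w); rewrite !scale1r. Qed.

Lemma phiZ n a u : phi n (a *: u) = a *: phi n u.
Proof. by move: (phi_lin n a u 0); rewrite !addr0 phi0 addr0. Qed.

Lemma phiN n u : phi n (- u) = - phi n u.
Proof. by rewrite -scaleN1r phiZ scaleN1r. Qed.

Lemma phi_sub n u w : phi n (u - w) = phi n u - phi n w.
Proof. by rewrite phiD phiN. Qed.

Lemma phi_sum n (I : Type) (s : seq I) (F : I -> fock R) :
  phi n (\sum_(i <- s) F i) = \sum_(i <- s) phi n (F i).
Proof. exact: (big_morph (phi n) (phiD n) (phi0 n)). Qed.

Lemma phiU n S : phi n << S >> = @phiB R n S.
Proof.
by rewrite /phi msuppU oner_eq0 big_seq_fset1 mcoeffUU scale1r.
Qed.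

Lemma phiUZ n a S : phi n (a *: << S >>) = a *: @phiB R n S.
Proof. by rewrite phiZ phiU. Qed.

End Lin.

Section AC.
Variable R : numFieldType.
Local Notation sg p S := ((-1) ^+ nabove p S : R).

Lemma nabove_U1 p q S : q \notin S -> nabove p (q |` S)%fset = (nabove p S + (p < q))%N.
Proof.
move=> hq; rewrite /nabove.
case: (ltnP p q) => hpq.
  have -> : [fset s in (q |` S)%fset | (p < s)%N]%fset =
      (q |` [fset s in S | (p < s)%N])%fset.
    by apply/fsetP => x; rewrite !inE; case: (eqVneq x q) => [->|] //=.
  by rewrite cardfsU1 !inE (negbTE hq) addnC.
have -> : [fset s in (q |` S)%fset | (p < s)%N]%fset = [fset s in S | (p < s)%N]%fset.
  apply/fsetP => x; rewrite !inE; case: (eqVneq x q) => [->|] //=.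
  by rewrite (negbTE hq) ltnNge hpq.
by rewrite addn0.
Qed.

Lemma nabove_D1 p q S : q \in S -> nabove p S = (nabove p (S `\ q)%fset + (p < q))%N.
Proof.
move=> hq; rewrite -{1}(fsetD1K hq) nabove_U1 //.
by rewrite !inE eqxx.
Qed.

Lemma sgsq k : (-1) ^+ k * (-1) ^+ k = 1 :> R.
Proof. by rewrite -expr2 -exprM mulnC exprM sqrrN !expr1n. Qed.

Lemma sgU p q S : q \notin S -> sg p (q |` S)%fset = (-1) ^+ (p < q) * sg p S.
Proof. by move=> h; rewrite nabove_U1 // exprD mulrC. Qed.

Lemma sgD p q S : q \in S -> sg p (S `\ q)%fset = (-1) ^+ (p < q) * sg p S.
Proof.
move=> h; rewrite (nabove_D1 p h) exprD mulrCA sgsq mulr1 //.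
Qed.

Lemma phiB_cre p S : p \notin S -> phiB R (Posz p) S = sg p S *: << (p |` S)%fset >>.
Proof. by move=> h; rewrite /phiB h. Qed.

Lemma phiB_cre0 S : 0%N \in S -> phiB R (Posz 0) S = (sg 0%N S / 2) *: << (S `\ 0%N)%fset >>.
Proof. by move=> h; rewrite /phiB h. Qed.

Lemma phiB_creN p S : p \in S -> p != 0%N -> phiB R (Posz p) S = 0.
Proof. by move=> h hp; rewrite /phiB h /= (negbTE hp). Qed.

Lemma phiB_ann q S : q.+1 \in S ->
  phiB R (Negz q) S = (sg q.+1 S * (-1) ^+ q.+1) *: << (S `\ q.+1)%fset >>.
Proof. by move=> h; rewrite /phiB h. Qed.

Lemma phiB_annN q S : q.+1 \notin S -> phiB R (Negz q) S = 0.
Proof. by move=> h; rewrite /phiB (negbTE h). Qed.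

Lemma setUD1 (a b : nat) (S : state) : a != b -> (a |` (S `\ b))%fset = ((a |` S) `\ b)%fset.
Proof.
move=> hab; apply/fsetP => x; rewrite !inE; case: (eqVneq x a) => [->|] //=.
by rewrite hab.
Qed.

Lemma setDD (a b : nat) (S : state) : ((S `\ a) `\ b)%fset = ((S `\ b) `\ a)%fset.
Proof. by apply/fsetP => x; rewrite !inE; case: (x != a); case: (x != b). Qed.

Definition cc (i j : int) : R := if (i + j == 0) then (-1) ^+ absz i else 0.

Lemma cc_0 i j : i + j != 0 -> cc i j = 0.
Proof. by rewrite /cc => /negbTE ->. Qed.

Lemma ccC i j : cc i j = cc j i.
Proof.
rewrite /cc addrC; case: eqP => // h; congr (_ ^+ _); lia.
Qed.

Lemma half_sq k : (-1) ^+ k / 2 * (-1) ^+ k + (-1) ^+ k / 2 * (-1) ^+ k = 1 :> R.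
Proof. by rewrite mulrAC sgsq mul1r [X in _ = X](splitr (1 : R)) mul1r. Qed.

Lemma AC_pp_same p S :
  phi (Posz p) (phiB R (Posz p) S) + phi (Posz p) (phiB R (Posz p) S) = cc (Posz p) (Posz p) *: << S >>.
Proof.
case: (boolP (p \in S)) => hS.
  case: (eqVneq p 0%N) => [E|hp].
    subst p; rewrite (phiB_cre0 hS) phiUZ phiB_cre ?fsetD11 // (fsetD1K hS) scalerA.
    rewrite (sgD 0%N hS) /= mul1r -scalerDl /cc /= expr0.
    by rewrite half_sq.
  rewrite (phiB_creN hS hp) phi0 addr0 cc_0 ?scale0r //; lia.
rewrite (phiB_cre hS) phiUZ.
case: (eqVneq p 0%N) => [E|hp].
  subst p; rewrite phiB_cre0 ?fset1U1 // (fsetU1K hS) scalerA (sgU 0%N hS) /= mul1r.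
  rewrite -scalerDl /cc /= expr0 [_ * (_ / 2)]mulrC.
  by rewrite half_sq.
rewrite phiB_creN ?fset1U1 // scaler0 addr0 cc_0 ?scale0r //; lia.
Qed.


Lemma scale_eq0 (a : R) (x : fock R) : a = 0 -> a *: x = 0.
Proof. by move->; rewrite scale0r. Qed.

Lemma AC_pp_half p p' S : p \in S -> p' \notin S -> p != p' ->
  phi (Posz p) (phiB R (Posz p') S) + phi (Posz p') (phiB R (Posz p) S) = 0.
Proof.
move=> hp hp' hpp.
rewrite (phiB_cre hp') phiUZ.
case: (eqVneq p 0%N) => [E|hp0].
  subst p; rewrite (phiB_cre0 hp) phiUZ.
  have hp0' : p' != 0%N by rewrite eq_sym.
  have h1 : 0%N \in (p' |` S)%fset by rewrite !inE hp orbT.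
  have h2 : p' \notin (S `\ 0%N)%fset by rewrite !inE (negbTE hp') andbF.
  rewrite (phiB_cre0 h1) (phiB_cre h2) !scalerA (setUD1 _ hp0').
  rewrite (sgU 0%N hp') (sgD p' hp) -scalerDl; apply: scale_eq0.
  have -> : (0 < p')%N by rewrite lt0n.
  rewrite /= expr1 expr0; ring.
rewrite (phiB_creN hp hp0) phi0 addr0.
have h1 : p \in (p' |` S)%fset by rewrite !inE hp orbT.
by rewrite (phiB_creN h1 hp0) scaler0.
Qed.

Lemma AC_pp_diff p p' S : p != p' ->
  phi (Posz p) (phiB R (Posz p') S) + phi (Posz p') (phiB R (Posz p) S) =
  cc (Posz p) (Posz p') *: << S >>.
Proof.
move=> hpp; rewrite cc_0 ?scale0r; last lia.
case: (boolP (p \in S)) => hp; case: (boolP (p' \in S)) => hp'.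
- case: (eqVneq p 0%N) => [E|hp0].
    subst p; have hp0' : p' != 0%N by rewrite eq_sym.
    rewrite (phiB_creN hp' hp0') phi0 add0r (phiB_cre0 hp) phiUZ phiB_creN ?scaler0 //.
    by rewrite !inE hp' hp0'.
  rewrite (phiB_creN hp hp0) phi0 addr0.
  case: (eqVneq p' 0%N) => [E|hp0'].
    subst p'; rewrite (phiB_cre0 hp') phiUZ phiB_creN ?scaler0 //.
    by rewrite !inE hp hp0.
  by rewrite (phiB_creN hp' hp0') phi0.
- exact: AC_pp_half.
- by rewrite addrC; apply: AC_pp_half => //; rewrite eq_sym.
rewrite (phiB_cre hp) (phiB_cre hp') !phiUZ.
have h1 : p \notin (p' |` S)%fset by rewrite !inE negb_or hpp hp.
have h2 : p' \notin (p |` S)%fset by rewrite !inE negb_or eq_sym hpp hp'.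
rewrite (phiB_cre h1) (phiB_cre h2) !scalerA (fsetUCA [fset p]%fset).
rewrite (sgU p hp') (sgU p' hp) -scalerDl; apply: scale_eq0.
case: (ltngtP p p') => h; [| | by move/eqP: hpp]; rewrite /= ?expr1 ?expr0; ring.
Qed.

Lemma AC_pn p q S :
  phi (Posz p) (phiB R (Negz q) S) + phi (Negz q) (phiB R (Posz p) S) =
  cc (Posz p) (Negz q) *: << S >>.
Proof.
case: (eqVneq p q.+1) => [E|hpP].
  subst p; have -> : cc (Posz q.+1) (Negz q) = (-1) ^+ q.+1.
    by rewrite /cc NegzE subrr eqxx.
  case: (boolP (q.+1 \in S)) => hP.
    rewrite (phiB_ann hP) phiUZ (phiB_creN hP) // phi0 addr0.
    have h : q.+1 \notin (S `\ q.+1)%fset by rewrite fsetD11.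
    rewrite (phiB_cre h) (fsetD1K hP) scalerA (sgD _ hP).
    by rewrite ltnn expr0 mul1r mulrAC sgsq mul1r.
  have h : q.+1 \in (q.+1 |` S)%fset by rewrite fset1U1.
  rewrite (phiB_annN hP) phi0 add0r (phiB_cre hP) phiUZ (phiB_ann h).
  by rewrite (fsetU1K hP) scalerA (sgU q.+1 hP) ltnn expr0 mul1r mulrA sgsq mul1r.
have -> : cc (Posz p) (Negz q) = 0 by rewrite cc_0 // NegzE; lia.
rewrite scale0r.
case: (boolP (q.+1 \in S)) => hP; last first.
  rewrite (phiB_annN hP) phi0 add0r; case: (boolP (p \in S)) => hp.
    case: (eqVneq p 0%N) => [E|hp0].
      subst p; rewrite (phiB_cre0 hp) phiUZ phiB_annN ?scaler0 //.
      by rewrite !inE (negbTE hP) andbF.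
    by rewrite (phiB_creN hp hp0) phi0.
  rewrite (phiB_cre hp) phiUZ phiB_annN ?scaler0 //.
  by rewrite !inE (negbTE hP) orbF eq_sym.
rewrite (phiB_ann hP) phiUZ.
case: (boolP (p \in S)) => hp.
  case: (eqVneq p 0%N) => [E|hp0].
    subst p; rewrite (phiB_cre0 hp) phiUZ.
    have h1 : 0%N \in (S `\ q.+1)%fset by rewrite !inE hp.
    have h2 : q.+1 \in (S `\ 0%N)%fset by rewrite !inE hP.
    rewrite (phiB_cre0 h1) (phiB_ann h2) !scalerA setDD (sgD 0%N hP) (sgD q.+1 hp) -scalerDl.
    apply: scale_eq0; rewrite /= expr1 expr0; ring.
  rewrite (phiB_creN hp hp0) phi0 addr0 phiB_creN ?scaler0 //.
  by rewrite !inE hpP hp.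
rewrite (phiB_cre hp) phiUZ.
have h1 : p \notin (S `\ q.+1)%fset by rewrite !inE (negbTE hp) andbF.
have h2 : q.+1 \in (p |` S)%fset by rewrite !inE hP orbT.
rewrite (phiB_cre h1) (phiB_ann h2) !scalerA (setUD1 _ hpP) (sgD p hP) (sgU q.+1 hp) -scalerDl.
apply: scale_eq0.
case: (ltngtP p q.+1) => h; [| | by move/eqP: hpP]; rewrite /= ?expr1 ?expr0; ring.
Qed.

Lemma AC_nn q q' S :
  phi (Negz q) (phiB R (Negz q') S) + phi (Negz q') (phiB R (Negz q) S) =
  cc (Negz q) (Negz q') *: << S >>.
Proof.
have -> : cc (Negz q) (Negz q') = 0 by rewrite cc_0 // !NegzE; lia.
rewrite scale0r.
case: (boolP (q.+1 \in S)) => hP; last first.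
  rewrite (phiB_annN hP) phi0 addr0.
  case: (boolP (q'.+1 \in S)) => hP'; last by rewrite (phiB_annN hP') phi0.
  by rewrite (phiB_ann hP') phiUZ phiB_annN ?scaler0 // !inE (negbTE hP) andbF.
case: (boolP (q'.+1 \in S)) => hP'; last first.
  rewrite (phiB_annN hP') phi0 add0r (phiB_ann hP) phiUZ phiB_annN ?scaler0 //.
  by rewrite !inE (negbTE hP') andbF.
case: (eqVneq q q') => [E|hqq].
  subst q'; have h : q.+1 \notin (S `\ q.+1)%fset by rewrite fsetD11.
  by rewrite (phiB_ann hP) phiUZ (phiB_annN h) scaler0 addr0.
rewrite (phiB_ann hP) (phiB_ann hP') !phiUZ.
have h1 : q.+1 \in (S `\ q'.+1)%fset by rewrite !inE hP eqSS hqq.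
have h2 : q'.+1 \in (S `\ q.+1)%fset by rewrite !inE hP' eqSS eq_sym hqq.
rewrite (phiB_ann h1) (phiB_ann h2) !scalerA setDD (sgD q.+1 hP') (sgD q'.+1 hP) -scalerDl.
apply: scale_eq0; rewrite !ltnS.
case: (ltngtP q q') => h; [| | by move/eqP: hqq]; rewrite /= ?expr1 ?expr0; ring.
Qed.

Lemma AC_basis i j S :
  phi i (phiB R j S) + phi j (phiB R i S) = cc i j *: << S >>.
Proof.
case: i => [p|q]; case: j => [p'|q'].
- by case: (eqVneq p p') => [<-|h]; [exact: AC_pp_same | exact: AC_pp_diff].
- exact: AC_pn.
- by rewrite addrC ccC; apply: AC_pn.
- exact: AC_nn.
Qed.

Lemma scaleU (a : R) S : a *: << S >> = << a *g S >> :> fock R.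
Proof.
apply/malgP => k; rewrite mcoeffZ !mcoeffU.
by case: (S == k); rewrite ?mulr1 ?mulr0.
Qed.

Lemma AC i j (v : fock R) : phi i (phi j v) + phi j (phi i v) = cc i j *: v.
Proof.
have E k k' : phi k (phi k' v) = \sum_(S <- msupp v) v@_S *: phi k (phiB R k' S).
  by rewrite [phi k' v]/phi phi_sum; apply: eq_bigr => S _; rewrite phiZ.
rewrite !E -big_split /= [in RHS](monalgE v) scaler_sumr.
apply: eq_bigr => S _; rewrite -scalerDr AC_basis scalerA mulrC -scalerA.
by rewrite scaleU.
Qed.

End AC.

Lemma oddabs (a b : int) : odd (absz (a + b)%R) = odd (absz a) (+) odd (absz b).
Proof.
have h m : odd m = (m %% 2 == 1)%N by rewrite modn2; case: (odd m).
rewrite !h.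
case: eqP => h1; case: eqP => h2; case: eqP => h3 //=; lia.
Qed.

Lemma filt_eq (a : int) (s : seq int) : [seq i <- s | i == a] = filter (pred1 a) s.
Proof. by []. Qed.

Lemma collapse (V : zmodType) N (a : int) (X : int -> V) : (absz a <= N)%N ->
  \sum_(i <- rng N) (if i == a then X i else 0) = X a.
Proof.
move=> ha; rewrite -big_mkcond -big_filter filt_eq filter_pred1_uniq ?uniq_rng ?mem_rng //.
by rewrite big_seq1.
Qed.

Section Main.
Variable R : numFieldType.
Implicit Types (v w : fock R).

Lemma sgabs (a b : int) : (-1) ^+ absz (a + b) = (-1) ^+ absz a * (-1) ^+ absz b :> R.
Proof. by rewrite -signr_odd oddabs signr_addb !signr_odd. Qed.

Definition bnd (B : nat) (v : fock R) :=
  forall S, S \in msupp v -> forall s, s \in S -> (s < B)%N.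

Lemma bnd_exists v : exists B, bnd B v.
Proof.
exists (\max_(S <- msupp v) \max_(s <- S) s.+1)%N => S hS s hs.
have h1 := @leq_bigmax_seq _ (enum_fset S) xpredT (fun s => s.+1) s hs isT.
have h2 := @leq_bigmax_seq _ (enum_fset (msupp v)) xpredT (fun S => \max_(s <- S) s.+1)%N S hS isT.
exact: leq_trans h1 h2.
Qed.

Lemma phi_ann B v q : bnd B v -> (B <= q.+1)%N -> phi (Negz q) v = 0.
Proof.
move=> hb hq; rewrite /phi big_seq big1 // => S hS.
have h : q.+1 \notin S by apply/negP => /(hb S hS); lia.
by rewrite (@phiB_annN R _ _ h) scaler0.
Qed.

Lemma phi_vac_neg q : phi (Negz q) (vac R) = 0.
Proof.
have h : q.+1 \notin (fset0 : state) by rewrite inE.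
by rewrite /vac phiU (@phiB_annN R _ _ h).
Qed.

Lemma nord_z1 B v q j : bnd B v -> (B <= q.+1)%N -> nord j (Negz q) v = 0.
Proof.
move=> hb hq; rewrite /nord /vev (phi_ann hb hq) phi_vac_neg !phi0 mcoeff0.
by rewrite scale0r subr0.
Qed.

Lemma nord_z2 B v q i : bnd B v -> (B <= q.+1)%N -> nord (Negz q) i v = 0.
Proof.
move=> hb hq.
have e1 : phi (Negz q) (phi i v) = cc R (Negz q) i *: v.
  by have := AC (Negz q) i v; rewrite (phi_ann hb hq) phi0 addr0.
have e2 : phi (Negz q) (phi i (vac R)) = cc R (Negz q) i *: vac R.
  by have := AC (Negz q) i (vac R); rewrite phi_vac_neg phi0 addr0.
by rewrite /nord /vev e1 e2 mcoeffZ /vac mcoeffUU mulr1 subrr.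
Qed.

Lemma nord_neg1 B v i j : bnd B v -> i < 0 -> (B <= absz i)%N -> nord j i v = 0.
Proof. case: i => [p|q] hb //= _; exact: nord_z1 hb. Qed.

Lemma nord_neg2 B v i j : bnd B v -> j < 0 -> (B <= absz j)%N -> nord j i v = 0.
Proof. case: j => [p|q] hb //= _; exact: nord_z2 hb. Qed.

Definition Kl (l : winf R) := (\max_(x <- l) absz x.1.2)%N.

Lemma Kl_ge (l : winf R) x : x \in l -> (absz x.1.2 <= Kl l)%N.
Proof. by move=> hx; exact: (@leq_bigmax_seq _ l xpredT (fun x : R * int * nat => absz x.1.2) x hx isT). Qed.

Lemma wact0 l i n : (Kl l < absz (n - i))%N -> wact l i n = 0.
Proof.
move=> h; rewrite /wact big_seq big1 // => x hx.
have hk := Kl_ge hx.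
have -> : (n == i + x.1.2) = false by apply/negbTE/eqP => E; move: h; rewrite E; lia.
by rewrite mulr0 mul0r.
Qed.

Lemma iota0 l i n : (Kl l < absz (n - i))%N -> iota_act l i n = 0.
Proof.
move=> h; rewrite /iota_act big_seq big1 // => x hx.
have hk := Kl_ge hx.
have -> : (n == i + x.1.2) = false by apply/negbTE/eqP => E; move: h; rewrite E; lia.
by rewrite mulr0 mul0r.
Qed.

Lemma zmod4 (V : zmodType) (a b c d : V) : a - (b - c) - d = (c - d) + (a - b).
Proof. by rewrite opprB [RHS]addrC addrACA !addrA. Qed.

Lemma nord_comm n i j v :
  nord j i (phi n v) = phi n (nord j i v) + (cc R i n *: phi j v - cc R j n *: phi i v).
Proof.
have h1 : phi i (phi n v) = cc R i n *: v - phi n (phi i v) by rewrite -(AC i n v) addrK.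
have h2 : phi j (phi n (phi i v)) = cc R j n *: phi i v - phi n (phi j (phi i v)).
  by rewrite -(AC j n (phi i v)) addrK.
rewrite /nord h1 phi_sub phiZ h2 phi_sub phiZ.
exact: zmod4.
Qed.

End Main.

Section Final.
Variable R : numFieldType.

Definition Aco (l : winf R) (i j : int) : R := (-1) ^+ absz j * wact l i (- j).

Lemma hatB_fin (l : winf R) (u : fock R) N :
  (forall i j, (N < absz i)%N \/ (N < absz j)%N -> Aco l i j *: nord j i u = 0) ->
  hatB l u = 2^-1 *: \sum_(i <- rng N) \sum_(j <- rng N) Aco l i j *: nord j i u.
Proof.
move=> h. rewrite /hatB.
rewrite (@zsumE _ N (fun i => zsum (fun j => Aco l i j *: nord j i u)) N); last first.
- by [].
- move=> i hi. rewrite (@zsumE _ N (fun j => Aco l i j *: nord j i u) N); last first.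
  + by [].
  + by move=> j hj; apply: h; right.
  by apply: big1 => j _; apply: h; left.
congr (_ *: _); apply: eq_bigr => i _.
rewrite (@zsumE _ N (fun j => Aco l i j *: nord j i u) N) //.
by move=> j hj; apply: h; right.
Qed.
Lemma wact_iota (l : winf R) j n :
  (-1) ^+ absz j * wact l (- n) (- j) * (-1) ^+ absz n = iota_act l j n.
Proof.
rewrite /wact /iota_act mulr_sumr mulr_suml; apply: eq_bigr => [[[c k] m]] _ /=.
have -> : (- j == - n + k) = (n == j + k) by apply/eqP/eqP => E; lia.
case: eqP => [E|_]; last by rewrite !(mulr0, mul0r).
rewrite E intrN sgabs !mulr1.
rewrite [_ * (c * _)]mulrC -!mulrA [X in _ * (_ * X)]mulrA sgsq mul1r.
by congr (_ * _); rewrite mulrC.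
Qed.

End Final.

Theorem lemma3p3 (R : numFieldType) (l : winf R) (n : int) (v : fock R) :
  comm (hatB l) (phi n) v = rhs l n v.
Proof.
have [B hB] := bnd_exists v.
pose K := Kl l.
pose N := (B + 2 * K + absz n)%N.
have F0 : forall i j, (N < absz i)%N \/ (N < absz j)%N -> Aco l i j *: nord j i v = 0.
  move=> i j; rewrite /N => hij.
  case: (leqP (absz (- j - i)) K) => hK; last by rewrite /Aco wact0 // mulr0 scale0r.
  have [[hi1 hi2]|[hj1 hj2]] : ((i < 0) /\ (B <= absz i)%N) \/ ((j < 0) /\ (B <= absz j)%N).
    by lia.
    by rewrite (@nord_neg1 R B v i j hB hi1 hi2) scaler0.
  by rewrite (@nord_neg2 R B v i j hB hj1 hj2) scaler0.
have Fp0 : forall i j, (N < absz i)%N \/ (N < absz j)%N ->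
    Aco l i j *: nord j i (phi n v) = 0.
  move=> i j hij; rewrite (nord_comm n i j v) scalerDr -(phiZ n (Aco l i j) (nord j i v)).
  have -> : phi n (Aco l i j *: nord j i v) = 0 by rewrite (F0 i j hij) phi0.
  rewrite add0r.
  move: hij; rewrite /N => hij.
  case: (leqP (absz (- j - i)) K) => hK; last by rewrite /Aco wact0 // mulr0 scale0r.
  have h1 : i + n != 0 by lia.
  have h2 : j + n != 0 by lia.
  by rewrite (cc_0 R h1) (cc_0 R h2) !scale0r subrr scaler0.
rewrite /comm. rewrite (hatB_fin Fp0). rewrite (hatB_fin F0).
have E1 : \sum_(i <- rng N) \sum_(j <- rng N) Aco l i j *: nord j i (phi n v) =
    phi n (\sum_(i <- rng N) \sum_(j <- rng N) Aco l i j *: nord j i v) +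
    \sum_(i <- rng N) \sum_(j <- rng N) Aco l i j *: (cc R i n *: phi j v - cc R j n *: phi i v).
  rewrite phi_sum -big_split; apply: eq_bigr => i _; rewrite phi_sum -big_split.
  by apply: eq_bigr => j _; rewrite (nord_comm n i j v) scalerDr phiZ.
have L : forall X Y : fock R, 2^-1 *: (phi n X + Y) - phi n (2^-1 *: X) = 2^-1 *: Y.
  by move=> X Y; rewrite phiZ scalerDr addrAC subrr add0r.
rewrite [in X in X - _ = _]E1. rewrite L.
rewrite /rhs (@zsumE _ N (fun i => (wact l i n - iota_act l i n) *: phi i v) N) //; last first.
  move=> i hi; rewrite wact0 ?iota0 ?subrr ?scale0r //; rewrite /N in hi; lia.
rewrite -scalerN; congr (_ *: _).
have S1 : \sum_(i <- rng N) \sum_(j <- rng N) Aco l i j *: (cc R i n *: phi j v) =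
    \sum_(j <- rng N) iota_act l j n *: phi j v.
  rewrite exchange_big; apply: eq_bigr => j _.
  rewrite (eq_bigr (fun i => if i == - n then (Aco l (- n) j * (-1) ^+ absz n) *: phi j v else 0)); last first.
    move=> i _; rewrite /cc addr_eq0; case: eqP => [->|_].
      by rewrite scalerA abszN.
    by rewrite scale0r scaler0.
  rewrite collapse; last by rewrite abszN /N; lia.
  by rewrite /Aco wact_iota.
have S2 : \sum_(i <- rng N) \sum_(j <- rng N) Aco l i j *: (cc R j n *: phi i v) =
    \sum_(i <- rng N) wact l i n *: phi i v.
  apply: eq_bigr => i _.
  rewrite (eq_bigr (fun j => if j == - n then (Aco l i (- n) * (-1) ^+ absz n) *: phi i v else 0)); last first.
    move=> j _; rewrite /cc addr_eq0; case: eqP => [->|_].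
      by rewrite scalerA abszN.
    by rewrite scale0r scaler0.
  rewrite collapse; last by rewrite abszN /N; lia.
  by rewrite /Aco abszN opprK mulrAC sgsq mul1r.
have SG : \sum_(i <- rng N) \sum_(j <- rng N) Aco l i j *: (cc R i n *: phi j v - cc R j n *: phi i v) =
    \sum_(i <- rng N) \sum_(j <- rng N) Aco l i j *: (cc R i n *: phi j v) -
    \sum_(i <- rng N) \sum_(j <- rng N) Aco l i j *: (cc R j n *: phi i v).
  rewrite -sumrB; apply: eq_bigr => i _; rewrite -sumrB; apply: eq_bigr => j _.
  by rewrite scalerBr.
rewrite [LHS]SG [X in X - _]S1 [X in _ - X]S2. rewrite -[LHS]sumrB -[RHS]sumrN. apply: eq_bigr => i _.
by rewrite scalerBl opprB.
Qed.
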